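(* There is a closed subset $B$ of $2^\omega$ such that $\lambda(B)>1/2$ and for each $x\in B$ we have $flip_n(x)\notin B$ for infinitely many $n\in\omega$.
   Context: $\lambda$ is the standard product (Haar/coin-tossing) measure on $2^\omega$. For $n\in\omega$, $flip_n\colon2^\omega\to2^\omega$ is given by $flip_n(x)=x+\chi_{\{n\}}$ (addition coordinatewise mod 2), i.e. it changes the $n$-th coordinate of $x$. *)

(* Defs.v *)
From HB Require Import structures.
From mathcomp Require Import all_boot all_order all_algebra.
From mathcomp Require Import all_classical all_reals all_analysis.
Set Implicit Arguments. Unset Strict Implicit. Unset Printing Implicit Defensive.
Import Order.TTheory GRing.Theory Num.Theory.
Local Open Scope classical_set_scope.
Local Open Scope ring_scope.

(* 2^omega = cantor_space (nat -> bool with the product topology). *)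

Definition cyl (s : seq bool) : set cantor_space :=
  [set x | forall i, (i < size s)%N -> x i = nth false s i].

(* On Borel sets (in particular closed sets) this is the product measure. *)
Definition lambda (R : realType) (A : set cantor_space) : \bar R :=
  ereal_inf [set (\sum_(k <oo) (((2 : R) ^- size (s k))%:E))%E
            | s in [set s : nat -> seq bool | A `<=` \bigcup_k cyl (s k)]].

Definition flip (n : nat) (x : cantor_space) : cantor_space :=
  fun k => if k == n then ~~ x k else x k.

(* Main.v *)
Require Import Defs.
From HB Require Import structures.
From mathcomp Require Import all_boot all_order all_algebra.
From mathcomp Require Import all_classical all_reals all_analysis.
From mathcomp Require Import ring lra.
Import Order.TTheory GRing.Theory Num.Theory.
Local Open Scope classical_set_scope.

Definition rr (j : nat) : nat := (j + 3)%N.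
Fixpoint ss (j : nat) : nat := if j is j'.+1 then (ss j' + (2 ^ rr j' + rr j'))%N else 0%N.
Definition bitn (a i : nat) : bool := odd (a %/ 2 ^ i).
Definition tgt (j : nat) (x : nat -> bool) (i : nat) : bool :=
  \big[addb/false]_(a < 2 ^ rr j) (x (ss j + a)%N && bitn a i).
Definition par (j i : nat) : nat := (ss j + 2 ^ rr j + i)%N.
Definition mtch (j : nat) (x : nat -> bool) (k : nat) : bool :=
  all (fun i => x (par j i) == tgt j x i) (iota 0 k).
Definition Bset : set cantor_space := [set x | forall j, ~~ mtch j x (rr j)].

Lemma nbhs_agree (x : cantor_space) N :
  nbhs x [set y : cantor_space | forall p, (p < N)%N -> y p = x p].
Proof.
elim: N => [|N IH].
  apply: (@filterS _ (nbhs x) _ setT); [by move=> y _ p | exact: filterT].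
have h1 : nbhs x [set y : cantor_space | y N = x N].
  have := @proj_continuous nat (fun _ => bool) N x.
  move=> /(_ [set x N]) ; apply.
  exact: discrete_set1.
apply: filterS (filterI IH h1) => y [H1 H2] p; rewrite ltnS leq_eqVlt.
by case/orP => [/eqP ->|/H1].
Qed.

Lemma ss_ge j : (j <= ss j)%N.
Proof.
elim: j => //= j IH; rewrite -addn1 leq_add //.
by rewrite (leq_trans _ (leq_addr _ _)) // expn_gt0.
Qed.

Lemma ssS j : ss j.+1 = par j (rr j).
Proof. by rewrite /par /= addnA. Qed.

Lemma binary r (e : nat -> bool) :
  exists2 a, (a < 2 ^ r)%N & forall i, (i < r)%N -> bitn a i = e i.
Proof.
elim: r => [|r [a Ha He]]; first by exists 0%N.
exists (a + e r * 2 ^ r)%N.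
  rewrite expnS mul2n -addnn; apply: leq_trans (_ : a.+1 + 2 ^ r <= _)%N.
    by rewrite addSn ltnS leq_add2l; case: (e r); rewrite ?mul1n ?mul0n.
  by rewrite leq_add2r.
move=> i; rewrite ltnS leq_eqVlt => /orP [/eqP ->|lt_ir].
  rewrite /bitn divnDr ?dvdn_mull // divn_small // add0n mulnK ?expn_gt0 //.
  by case: (e r).
have -> : (e r * 2 ^ r = e r * 2 ^ (r - i) * 2 ^ i)%N.
  by rewrite -mulnA -expnD subnK // ltnW.
rewrite /bitn divnDr ?dvdn_mull // mulnK ?expn_gt0 // oddD oddM.
have -> : odd (2 ^ (r - i)) = false.
  by rewrite oddX subn_eq0 leqNgt lt_ir.
by rewrite andbF addbF -He.
Qed.

Lemma tgt_flip j (x : cantor_space) a i : (a < 2 ^ rr j)%N ->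
  tgt j (flip (ss j + a) x) i = tgt j x i (+) bitn a i.
Proof.
move=> ha; rewrite /tgt (bigD1 (Ordinal ha)) //= [in RHS](bigD1 (Ordinal ha)) //=.
rewrite /flip eqxx.
rewrite (eq_bigr (fun k : 'I_(2 ^ rr j) => x (ss j + k)%N && bitn k i)); last first.
  move=> k /negbTE hk; rewrite eqn_add2l.
  by have -> : (k == a :> nat) = false by [move: hk; rewrite -val_eqE].
by case: (x _); case: (bitn a i); case: (\big[_/_]_(_ | _) _).
Qed.

Lemma tgt_ext j (x y : nat -> bool) i :
  (forall p, (p < ss j + 2 ^ rr j)%N -> x p = y p) -> tgt j x i = tgt j y i.
Proof.
move=> H; apply: eq_bigr => k _; rewrite H // ltn_add2l //.
Qed.

Lemma mtch_ext j (x y : nat -> bool) k :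
  (forall p, (p < par j k)%N -> x p = y p) -> mtch j x k = mtch j y k.
Proof.
move=> H; apply: eq_in_all => i; rewrite mem_iota add0n => /andP [_ hi].
rewrite H; last by rewrite /par ltn_add2l.
rewrite (@tgt_ext j x y) // => p hp; apply: H.
by apply: leq_trans hp _; rewrite /par leq_addr.
Qed.

Lemma flip_exit j (x : cantor_space) :
  exists2 a, (a < 2 ^ rr j)%N & mtch j (flip (ss j + a) x) (rr j).
Proof.
have [a ha He] := binary (rr j) (fun i => x (par j i) (+) tgt j x i).
exists a => //; apply/allP => i; rewrite mem_iota add0n => /andP [_ hi].
rewrite tgt_flip // He //.
have -> : flip (ss j + a) x (par j i) = x (par j i).
  rewrite /flip; case: eqP => // habs.
  by move: ha; rewrite -(ltn_add2l (ss j)) -habs /par -addnA ltn_add2l ltnNge leq_addr.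
by case: (x _); case: (tgt _ _ _).
Qed.

Lemma Bset_closed : closed Bset.
Proof.
move=> p clp; apply: contrapT => /existsNP [j /negP /negPn hj].
have := clp _ (nbhs_agree p (par j (rr j))).
move=> [y [By Hy]]; move: (By j); rewrite (@mtch_ext j y p) ?hj //.
Qed.


Fixpoint JJ (l : nat) : nat :=
  if l is l'.+1 then (if l' == ss (JJ l') then (JJ l').+1 else JJ l') else 0%N.

Lemma ss_mono j k : (j < k)%N -> (ss j < ss k)%N.
Proof.
elim: k => // k IH; rewrite ltnS leq_eqVlt => /orP [/eqP ->|/IH h].
  by rewrite /= -[X in (X < _)%N]addn0 ltn_add2l addn_gt0 expn_gt0.
apply: leq_trans h _; rewrite /= leq_addr //.
Qed.

Lemma ss_le j k : (j <= k)%N -> (ss j <= ss k)%N.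
Proof. by rewrite leq_eqVlt => /orP [/eqP ->|/ss_mono /ltnW]. Qed.

Lemma JJ_inv l : (l <= ss (JJ l))%N /\ (forall k, (k < JJ l)%N -> (ss k < l)%N).
Proof.
elim: l => [|l [H1 H2]] /=; first by split.
case: eqP => [E|NE].
  split; first by rewrite {1}E ss_mono.
  move=> k; rewrite ltnS leq_eqVlt => /orP [/eqP ->|/H2 h]; first by rewrite -E.
  exact: ltnW.
split; first by rewrite ltn_neqAle H1 andbT; apply/eqP.
by move=> k /H2 /ltnW.
Qed.

Lemma JJ_lt l k : (ss k.+1 <= l)%N -> (k < JJ l)%N.
Proof.
move=> h; case: (JJ_inv l) => H1 _; rewrite ltnNge; apply/negP => hk.
have := leq_trans h (leq_trans H1 (ss_le _ _ hk)).
by rewrite leqNgt ss_mono.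
Qed.


Local Open Scope ring_scope.

Definition w (R : realType) (n : nat) : R := (2^-1 : R) ^+ n.
Definition ip (j l : nat) : nat := minn (rr j) (l - (ss j + 2 ^ rr j))%N.
Definition q (R : realType) j (u : seq bool) : R :=
  w R (rr j - ip j (size u))%N * (mtch j (nth false u) (ip j (size u)))%:R.
Definition FF (R : realType) (J : nat) : R := 1 - 2 * w R (rr J).
Definition g (R : realType) (u : seq bool) : R :=
  (\prod_(k < JJ (size u)) (1 - q R k u)) * FF R (JJ (size u)).

Lemma w_ge0 (R : realType) n : 0 <= w R n.
Proof. by rewrite /w exprn_ge0 // invr_ge0. Qed.

Lemma w_le1 (R : realType) n : w R n <= 1.
Proof. by rewrite /w exprn_ile1 // invf_le1 // ler1n. Qed.

Lemma wS (R : realType) n : w R n.+1 = w R n / 2.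
Proof. by rewrite /w exprSr. Qed.

Lemma w_anti (R : realType) m n : (m <= n)%N -> w R n <= w R m.
Proof.
move=> h; rewrite /w; apply: ler_wiXn2l => //.
by rewrite invf_le1 // ler1n.
Qed.

Lemma q_ge0 (R : realType) j u : 0 <= q R j u.
Proof. by rewrite /q mulr_ge0 ?w_ge0 // ler0n. Qed.

Lemma q_le1 (R : realType) j u : q R j u <= 1.
Proof.
rewrite /q; case: (mtch _ _ _); rewrite ?mulr1 ?mulr0 ?w_le1 //.
Qed.

Lemma FF_ge0 (R : realType) J : 0 <= FF R J.
Proof.
rewrite /FF subr_ge0 /rr addn3 !wS.
have := w_le1 R J; have := w_ge0 R J; lra.
Qed.

Lemma FF_le1 (R : realType) J : FF R J <= 1.
Proof. by rewrite /FF lerBlDr lerDl mulr_ge0 // w_ge0. Qed.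

Lemma prod_ge0 (R : realType) n (u : seq bool) : 0 <= \prod_(k < n) (1 - q R k u).
Proof. by apply: prodr_ge0 => k _; rewrite subr_ge0 q_le1. Qed.

Lemma prod_le1 (R : realType) n (u : seq bool) : \prod_(k < n) (1 - q R k u) <= 1.
Proof.
apply: prodr_ile1 => k _; rewrite subr_ge0 q_le1 /= lerBlDr lerDl q_ge0 //.
Qed.

Lemma g_ge0 (R : realType) u : 0 <= g R u.
Proof. by rewrite /g mulr_ge0 ?prod_ge0 ?FF_ge0. Qed.

Lemma g_le1 (R : realType) u : g R u <= 1.
Proof.
rewrite /g; apply: le_trans (_ : 1 * 1 <= 1); last by rewrite mulr1.
by apply: ler_pM; rewrite ?prod_ge0 ?FF_ge0 ?prod_le1 ?FF_le1.
Qed.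

Lemma g_nil (R : realType) : g R [::] = 3 / 4.
Proof. rewrite /g /= big_ord0 mul1r /FF /rr /= /w; by field. Qed.

Lemma nth_rcons_lt (u : seq bool) b p : (p < size u)%N -> nth false (rcons u b) p = nth false u p.
Proof. by move=> h; rewrite nth_rcons h. Qed.

Lemma q_stable (R : realType) k u b : (ss k.+1 <= size u)%N -> q R k (rcons u b) = q R k u.
Proof.
move=> h.
have E l : (ss k.+1 <= l)%N -> ip k l = rr k.
  move=> hl; apply/minn_idPl; rewrite leq_subRL; first by move: hl; rewrite ssS.
  by apply: leq_trans hl; rewrite ssS /par leq_addr.
rewrite /q size_rcons !E //; last exact: leqW.
congr (_ * (_ : bool)%:R); apply: mtch_ext => p hp; apply: nth_rcons_lt.
by apply: leq_trans h; rewrite ssS.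
Qed.

Lemma q_new (R : realType) J u b : size u = ss J -> q R J (rcons u b) = w R (rr J).
Proof.
move=> h; rewrite /q size_rcons h.
have -> : ip J (ss J).+1 = 0%N.
  rewrite /ip; have -> : ((ss J).+1 - (ss J + 2 ^ rr J))%N = 0%N.
    by apply/eqP; rewrite subn_eq0 -addn1 leq_add2l expn_gt0.
  by rewrite minn0.
by rewrite subn0 /mtch /= mulr1.
Qed.

Lemma q_step (R : realType) j u : (ss j < size u)%N -> (size u < ss j.+1)%N ->
  q R j (rcons u false) + q R j (rcons u true) = 2 * q R j u.
Proof.
move=> h1 h2; rewrite /q !size_rcons.
case: (ltnP (size u) (ss j + 2 ^ rr j)) => h3.
  have E l : (l <= ss j + 2 ^ rr j)%N -> ip j l = 0%N.
    by move=> hl; rewrite /ip (eqP (_ : l - _ == 0)%N) ?minn0 // subn_eq0.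
  rewrite (E (size u).+1) // (E (size u)); last exact: ltnW.
  by rewrite /mtch /= mulr1; ring.
set i := (size u - (ss j + 2 ^ rr j))%N.
have hi : (i < rr j)%N.
  by rewrite /i ltn_subLR //; move: h2; rewrite ssS.
have Eu : ip j (size u) = i by rewrite /ip; apply/minn_idPr/ltnW.
have Eu1 : ip j (size u).+1 = i.+1.
  by rewrite /ip subSn // /i; apply/minn_idPr.
have hpar : par j i = size u by rewrite /par /i subnKC.
have M b : mtch j (nth false (rcons u b)) i.+1 =
    mtch j (nth false u) i && (b == tgt j (nth false u) i).
  rewrite /mtch -addn1 iotaD all_cat /= andbT add0n.
  congr andb.
    apply: (@mtch_ext j (nth false (rcons u b)) (nth false u) i) => p hp.
    by apply: nth_rcons_lt; rewrite -hpar.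
  rewrite hpar nth_rcons ltnn eqxx; congr (_ == _).
  apply: tgt_ext => p hp; apply: nth_rcons_lt; apply: leq_trans hp _.
  by rewrite -hpar /par leq_addr.
rewrite Eu Eu1 !M.
have -> : (rr j - i = (rr j - i.+1).+1)%N by rewrite subnSK.
rewrite wS.
case: (mtch _ _ _); case: (tgt _ _ _) => /=; rewrite ?mulr0 ?mulr1 ?addr0 ?add0r; by field.
Qed.

Lemma g_mart (R : realType) u : 2 * g R u <= g R (rcons u false) + g R (rcons u true).
Proof.
have [H1 H2] := JJ_inv (size u).
rewrite /g !size_rcons /=; case: eqP => E.
  rewrite !big_ord_recr /= !q_new //.
  have S b : \prod_(k < JJ (size u)) (1 - q R k (rcons u b)) =
             \prod_(k < JJ (size u)) (1 - q R k u).
    have E' : (ss (JJ (size u)) <= size u)%N by rewrite -E.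
    by apply: eq_bigr => k _; rewrite q_stable //; apply: leq_trans (ss_le _ _ (ltn_ord k)) E'.
  rewrite !S.
  have hP := prod_ge0 R (JJ (size u)) u.
  set P := \prod_(_ < _) _ in hP *.
  have he0 := w_ge0 R (rr (JJ (size u))).
  have he1 := w_le1 R (rr (JJ (size u))).
  rewrite /FF /rr addSn -/(rr _) wS.
  set e := w R (rr _) in he0 he1 *.
  have : 0 <= P * e * e by rewrite !mulr_ge0.
  nra.
move: E H1 H2; case: (JJ (size u)) => [|j] E H1 H2.
  by exfalso; apply: E; move: H1; rewrite leqn0 => /eqP ->.
rewrite !big_ord_recr /=.
have S b : \prod_(k < j) (1 - q R k (rcons u b)) = \prod_(k < j) (1 - q R k u).
  apply: eq_bigr => k _; rewrite q_stable //.
  by apply: ltnW; apply: leq_trans (H2 j (ltnSn _)); apply: ss_le.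
rewrite !S.
have h2 : (size u < ss j.+1)%N by rewrite ltn_neqAle H1 andbT; apply/eqP.
have Hq := @q_step R j u (H2 j (ltnSn _)) h2.
have -> : (\prod_(i < j) (1 - q R i u) * (1 - q R j (rcons u false)) * FF R j.+1 +
  \prod_(i < j) (1 - q R i u) * (1 - q R j (rcons u true)) * FF R j.+1) =
  \prod_(i < j) (1 - q R i u) * FF R j.+1 * (2 - (q R j (rcons u false) + q R j (rcons u true))).
  by ring.
rewrite Hq; apply: le_trans (le_refl _) _; rewrite le_eqVlt; apply/orP; left; apply/eqP; ring.
Qed.

Lemma ip_full k l : (ss k.+1 <= l)%N -> ip k l = rr k.
Proof.
move=> hl; apply/minn_idPl; rewrite leq_subRL; first by move: hl; rewrite ssS.
by apply: leq_trans hl; rewrite ssS /par leq_addr.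
Qed.

Lemma g_pos_nomatch (R : realType) u k : 0 < g R u -> (ss k.+1 <= size u)%N ->
  ~~ mtch k (nth false u) (rr k).
Proof.
move=> hg hk; apply/negP => hm; move: hg.
have hkJ := @JJ_lt _ _ hk.
rewrite /g (bigD1 (Ordinal hkJ)) //= /q ip_full // subnn hm /w expr0 mulr1 subrr.
by rewrite !mul0r ltxx.
Qed.

Fixpoint ext (R : realType) (u : seq bool) (n : nat) : seq bool :=
  if n is n'.+1 then rcons (ext R u n') (0 < g R (rcons (ext R u n') true)) else u.

Lemma ext_size (R : realType) u n : size (ext R u n) = (size u + n)%N.
Proof. by elim: n => [|n IH] /=; rewrite ?addn0 // size_rcons IH addnS. Qed.

Lemma ext_pos (R : realType) u n : 0 < g R u -> 0 < g R (ext R u n).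
Proof.
move=> hu; elim: n => [|n IH] //=.
set w0 := ext R u n in IH *.
case: (boolP (0 < g R (rcons w0 true))) => h //.
move: h; rewrite -leNgt => h.
have := g_mart R w0; lra.
Qed.

Lemma ext_nth (R : realType) u n m p : (n <= m)%N -> (p < size (ext R u n))%N ->
  nth false (ext R u m) p = nth false (ext R u n) p.
Proof.
move=> hnm hp; elim: m hnm => [|m IH].
  by rewrite leqn0 => /eqP ->.
rewrite leq_eqVlt => /orP [/eqP ->//|]; rewrite ltnS => hm /=.
rewrite nth_rcons -IH //.
suff -> : (p < size (ext R u m))%N by [].
by apply: leq_trans hp _; rewrite !ext_size leq_add2l.
Qed.

Lemma g_point (R : realType) u : 0 < g R u ->
  exists x : cantor_space, Bset x /\ forall p, (p < size u)%N -> x p = nth false u p.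
Proof.
move=> hu.
pose x : cantor_space := fun p => nth false (ext R u p.+1) p.
have Hx n p : (p < size (ext R u n))%N -> x p = nth false (ext R u n) p.
  move=> hp; rewrite /x.
  case: (leqP n p.+1) => h.
    by rewrite (@ext_nth R u n p.+1).
  rewrite -(@ext_nth R u p.+1 n) //; first exact: ltnW.
  by rewrite ext_size addnS ltnS leq_addl.
exists x; split; last first.
  by move=> p hp; rewrite (Hx 0%N) //.
move=> j.
have hs : (ss j.+1 <= size (ext R u (ss j.+1)))%N by rewrite ext_size leq_addl.
rewrite (@mtch_ext j x (nth false (ext R u (ss j.+1))) (rr j)).
  exact: (@g_pos_nomatch R _ j (ext_pos R u (ss j.+1) hu) hs).
move=> p hp; apply: Hx; apply: leq_trans hp _; rewrite -ssS //.
Qed.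

Definition pre (s u : seq bool) : bool := take (size s) u == s.

Lemma pre_size s u : pre s u -> (size s <= size u)%N.
Proof.
move=> /eqP h; rewrite -{1}h size_take; case: ifP => //; exact: ltnW.
Qed.

Lemma agree_pre (x : cantor_space) s u : cyl s x ->
  (forall p, (p < size u)%N -> x p = nth false u p) -> (size s <= size u)%N -> pre s u.
Proof.
move=> hs hu hsu; rewrite /cyl /= in hs; apply/eqP; apply: (@eq_from_nth _ false).
  by rewrite size_take; case: ifP => // /negbT; rewrite -leqNgt => h; apply/eqP; rewrite eqn_leq h hsu.
move=> i; rewrite size_take => h2.
have hi : (i < size s)%N.
  by move: h2; case: ifP => // /negbT; rewrite -leqNgt => h h2; apply: leq_trans h2 h.
have hiu : (i < size u)%N by apply: leq_trans hi hsu.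
rewrite nth_take // -hu //; exact: hs.
Qed.

Lemma claim_pre (R : realType) (sq : nat -> seq bool) K u (P : pred nat) :
  [exists k : 'I_K, P k && pre (sq k) u] ->
  g R u * w R (size u) <= \sum_(k < K | P k) w R (size (sq k)).
Proof.
move=> /existsP [k /andP [Pk hk]].
rewrite (bigD1 k) //=.
have h1 := @w_anti R _ _ (@pre_size _ _ hk).
have h2 := g_le1 R u; have h3 := w_ge0 R (size u).
have h4 : 0 <= \sum_(i < K | P i && (i != k)) w R (size (sq i)).
  by apply: sumr_ge0 => i _; apply: w_ge0.
have h5 : g R u * w R (size u) <= w R (size u).
  by rewrite -[X in _ <= X]mul1r ler_wpM2r.
lra.
Qed.

Lemma cover_claim (R : realType) (sq : nat -> seq bool) K n : forall u (P : pred nat),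
  (forall x, Bset x -> (forall p, (p < size u)%N -> x p = nth false u p) ->
     exists k, [/\ (k < K)%N, P k & cyl (sq k) x]) ->
  (forall k, (k < K)%N -> P k -> (size (sq k) <= size u + n)%N) ->
  g R u * w R (size u) <= \sum_(k < K | P k) w R (size (sq k)).
Proof.
have sum_ge0 (P : pred nat) : 0 <= \sum_(k < K | P k) w R (size (sq k)).
  by apply: sumr_ge0 => k _; apply: w_ge0.
elim: n => [|n IH] u P Hcov Hlen;
  (case: (boolP [exists k : 'I_K, P k && pre (sq k) u]) => [hex|hno];
   [exact: claim_pre | ]).
  - case: (leP (g R u) 0) => hg.
      have := sum_ge0 P; have := w_ge0 R (size u); nra.
    have [x [Bx Hx]] := @g_point R u hg.
    have [k [hk Pk ck]] := Hcov x Bx Hx.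
    exfalso; move/negP: hno; apply; apply/existsP; exists (Ordinal hk) => /=.
    rewrite Pk /=; apply: (@agree_pre _ _ _ ck Hx); rewrite -[size u]addn0; exact: Hlen.
  - have Hc b : forall x, Bset x -> (forall p, (p < size (rcons u b))%N -> x p = nth false (rcons u b) p) ->
       exists k, [/\ (k < K)%N, (P k && (nth false (sq k) (size u) == b)) & cyl (sq k) x].
      move=> x Bx Hx.
      have Hx' : forall p, (p < size u)%N -> x p = nth false u p.
        by move=> p hp; rewrite Hx ?nth_rcons_lt // size_rcons ltnS ltnW.
      have [k [hk Pk ck]] := Hcov x Bx Hx'.
      exists k; split => //; rewrite Pk /=.
      case: (leqP (size (sq k)) (size u)) => hs.
        exfalso; move/negP: hno; apply; apply/existsP; exists (Ordinal hk) => /=.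
        by rewrite Pk /=; apply: (@agree_pre _ _ _ ck Hx').
      by rewrite -ck // Hx ?size_rcons // nth_rcons ltnn eqxx.
    have Hl b : forall k, (k < K)%N -> (P k && (nth false (sq k) (size u) == b)) ->
        (size (sq k) <= size (rcons u b) + n)%N.
      by move=> k hk /andP [Pk _]; rewrite size_rcons addSnnS; apply: Hlen.
    have I0 := IH _ _ (Hc false) (Hl false).
    have I1 := IH _ _ (Hc true) (Hl true).
    rewrite (bigID (fun k : 'I_K => nth false (sq k) (size u) == false)) /=.
    have -> : \sum_(i < K | P i && ~~ (nth false (sq i) (size u) == false)) w R (size (sq i)) =
              \sum_(i < K | P i && (nth false (sq i) (size u) == true)) w R (size (sq i)).
      by apply: eq_bigl => i; case: (nth _ _ _).
    move: I0 I1; rewrite !size_rcons !wS.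
    have hm := g_mart R u; have hw := w_ge0 R (size u).
    nra.
Qed.


Lemma cyl_open s : open (cyl s).
Proof.
rewrite openE => x hx; apply: filterS (nbhs_agree x (size s)) => y hy i hi.
by rewrite hy //; apply: hx.
Qed.

Lemma Bset_compact : compact Bset.
Proof. exact: (subclosed_compact Bset_closed cantor_space_compact). Qed.

Lemma lower (R : realType) (sq : nat -> seq bool) :
  Bset `<=` \bigcup_k cyl (sq k) ->
  ((3 / 4 : R)%:E <= \sum_(k <oo) (((2 : R) ^- size (sq k))%:E))%E.
Proof.
move=> Hcov.
have := Bset_compact; rewrite compact_cover => /(_ nat setT (fun k => cyl (sq k))) [].
- by move=> i _; exact: cyl_open.
- by move=> x /Hcov [k _ hk]; exists k.
move=> D' _ HD'.
set K := (\max_(k <- finmap.enum_fset D') k).+1.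
set N := \max_(k < K) size (sq k).
have H := @cover_claim R sq K N [::] xpredT.
rewrite g_nil /w expr0 mulr1 /= in H.
have {}H : 3 / 4 <= \sum_(k < K) w R (size (sq k)).
  apply: H.
    move=> x Bx _; have [k Dk ck] := HD' x Bx.
    exists k; split => //; rewrite /K ltnS; apply: leq_bigmax_seq => //.
  move=> k hk _; rewrite add0n /N.
  exact: (@leq_bigmax _ (fun i : 'I_K => size (sq i)) (Ordinal hk)).
have Ew n : w R n = (2 : R) ^- n by rewrite /w exprVn.
apply: (@le_trans _ _ (\sum_(0 <= k < K) (((2 : R) ^- size (sq k))%:E))%E).
  rewrite sumEFin lee_fin big_mkord; apply: le_trans H _.
  by rewrite le_eqVlt; apply/orP; left; apply/eqP; apply: eq_bigr => i _; rewrite Ew.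
apply: nneseries_lim_ge => n _ _; rewrite lee_fin invr_ge0 exprn_ge0 //.
Qed.

Theorem proposition6p2 (R : realType) :
  exists B : set cantor_space,
    closed B /\
    (((1 / 2 : R)%:E < lambda R B)%E) /\
    (forall x, B x -> forall m : nat, exists n : nat, (m <= n)%N /\ ~ B (flip n x)).
Proof.
exists Bset; split; first exact: Bset_closed.
split.
  apply: (@lt_le_trans _ _ ((3 / 4 : R)%:E)); first by rewrite lte_fin; lra.
  rewrite /lambda; apply: le_ereal_inf_tmp => y [sq Hsq <-]; exact: lower.
move=> x _ m; have [a ha hm] := flip_exit m x.
exists (ss m + a)%N; split; first exact: leq_trans (ss_ge m) (leq_addr _ _).
by move=> hB; move: (hB m); rewrite hm.
Qed.
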